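(* Let $n\geqslant 2$ and $N=\{1,\ldots,n\}$. Then $\mathscr{BG}(n)$, viewed as a subset of $\mathbb{R}^{2^N\setminus\{\varnothing\}}$, is a $(2^n-1)$-dimensional polyhedral cone which is not pointed. Its lineality space has dimension $n$, with basis $(w_i)_{i\in N}$, where $w_i=\sum_{S\subseteq N,\, S\ni i}\delta_S$.
   Context: A game on $N=\{1,\ldots,n\}$ is a map $v:2^N\to\mathbb{R}$ with $v(\varnothing)=0$; games are identified with vectors in $\mathbb{R}^{2^N\setminus\{\varnothing\}}$. For nonempty $S\subseteq N$, the Dirac game $\delta_S$ is defined by $\delta_S(T)=1$ if $T=S$ and $0$ otherwise. A collection $\mathscr{B}$ of nonempty subsets of $N$ is balanced if there exist positive weights $(\lambda_S)_{S\in\mathscr{B}}$ with $\sum_{S\in\mathscr{B},S\ni i}\lambda_S=1$ for all $i\in N$; it is minimal balanced if no proper subcollection is balanced; a minimal balanced collection has a unique system of such weights, denoted $\lambda^{\mathscr{B}}_S$. $\mathfrak{B}^*(n)$ denotes the set of all minimal balanced collections on $N$ other than $\{N\}$. $\mathscr{BG}(n)$ is the set of games $v$ with $\sum_{S\in\mathscr{B}}\lambda^{\mathscr{B}}_S v(S)\leqslant v(N)$ for all $\mathscr{B}\in\mathfrak{B}^*(n)$ (the balanced games, equivalently those with nonempty core). *)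

(* Defs.v *)
From mathcomp Require Import all_boot all_order all_algebra.
Set Implicit Arguments. Unset Strict Implicit. Unset Printing Implicit Defensive.
Import Order.TTheory GRing.Theory Num.Theory.
Local Open Scope ring_scope.

(* Nonempty subsets of N = 'I_n (players are 0..n-1). *)
Notation nes n := {S : {set 'I_n} | S != set0}.

Section Games.
Variable R : realFieldType.

Definition game (n : nat) := {ffun nes n -> R}.

(* The value v(T) of a game at an arbitrary coalition T, with v(emptyset) = 0. *)
Definition gval n (v : game n) (T : {set 'I_n}) : R :=
  oapp (fun S : nes n => v S) 0 (insub T : option (nes n)).

Definition dirac n (S : {set 'I_n}) : game n := [ffun T : nes n => (val T == S)%:R].

Definition wgame n (i : 'I_n) : game n :=
  \sum_(S : {set 'I_n} | i \in S) dirac S.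

Definition wseq n : seq (game n) := [seq wgame i | i <- enum 'I_n].

Definition balancing_weights n (B : {set {set 'I_n}}) (lam : {set 'I_n} -> R) :=
  (forall S, S \in B -> 0 < lam S) /\
  (forall i : 'I_n, \sum_(S in B | i \in S) lam S = 1).

Definition balanced n (B : {set {set 'I_n}}) :=
  set0 \notin B /\ exists lam, balancing_weights B lam.

Definition minimal_balanced n (B : {set {set 'I_n}}) :=
  balanced B /\ forall B' : {set {set 'I_n}}, B' \proper B -> ~ balanced B'.

(* BG(n): for every minimal balanced collection B <> {N}, with its (unique)
   system of balancing weights lam^B, sum_S lam^B_S v(S) <= v(N). *)
Definition BG n (v : game n) : Prop :=
  forall B : {set {set 'I_n}}, minimal_balanced B -> B != [set setT] ->
  forall lam, balancing_weights B lam ->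
    \sum_(S in B) lam S * gval v S <= gval v setT.

Definition dotp (T : finType) (a x : {ffun T -> R}) : R := \sum_t a t * x t.

Definition polyhedral_cone (T : finType) (C : {ffun T -> R} -> Prop) :=
  exists A : seq {ffun T -> R}, forall x, C x <-> (forall a, a \in A -> dotp a x <= 0).

Definition lincomb (T : finType) (X : seq {ffun T -> R}) (c : 'I_(size X) -> R)
  : {ffun T -> R} := [ffun t => \sum_(i < size X) c i * X`_i t].

Definition in_span (T : finType) (X : seq {ffun T -> R}) (x : {ffun T -> R}) :=
  exists c : 'I_(size X) -> R, x = @lincomb T X c.

Definition lin_free (T : finType) (X : seq {ffun T -> R}) :=
  forall c : 'I_(size X) -> R, @lincomb T X c = 0 -> forall i, c i = 0.

(* For a cone (containing 0) this is the dimension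
   of its affine hull, i.e. the dimension of the cone. *)
Definition dim_eq (T : finType) (C : {ffun T -> R} -> Prop) (d : nat) :=
  exists X : seq {ffun T -> R},
    (forall x, x \in X -> C x) /\ lin_free X /\ size X = d /\
    (forall x, C x -> in_span X x).

Definition lineality (T : finType) (C : {ffun T -> R} -> Prop) (x : {ffun T -> R}) :=
  C x /\ C (- x).

Definition pointed (T : finType) (C : {ffun T -> R} -> Prop) :=
  forall x, lineality C x -> x = 0.

End Games.

(* Main.v *)
Require Import Defs.
From Stdlib Require Import Classical_Prop.
From mathcomp Require Import all_boot all_order all_algebra.
Set Implicit Arguments. Unset Strict Implicit. Unset Printing Implicit Defensive.
Import Order.TTheory GRing.Theory Num.Theory.
Local Open Scope ring_scope.

Section Aux.
Variable R : realFieldType.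
Variable n : nat.
Implicit Types (v : game R n) (B : {set {set 'I_n}}).

Lemma sum_nes (F : {set 'I_n} -> R) :
  \sum_(T : nes n) F (val T) = \sum_(S | S != set0) F S.
Proof.
symmetry.
rewrite (reindex_omap (val : nes n -> _) insub); last first.
  by move=> i Pi; rewrite insubT.
by apply: eq_bigl=> -[i iA]/=; rewrite insubT /= iA eqxx.
Qed.

Lemma gval_val v (T : nes n) : gval v (val T) = v T.
Proof. by rewrite /gval valK. Qed.

Lemma gval0 v : gval v set0 = 0.
Proof. by rewrite /gval insubF ?eqxx. Qed.

Lemma gvalN v S : gval (- v) S = - gval v S.
Proof. by rewrite /gval; case: insubP => [u _ _|_] /=; rewrite ?ffunE ?oppr0. Qed.

Lemma sum_gval (F : {set 'I_n} -> R) v :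
  \sum_(T : nes n) F (val T) * v T = \sum_S F S * gval v S.
Proof.
rewrite (bigD1 set0) //= gval0 mulr0 add0r -sum_nes.
by apply: eq_bigr => T _; rewrite gval_val.
Qed.

Lemma gval_dirac (T S : {set 'I_n}) : T != set0 -> gval (dirac R T) S = (S == T)%:R.
Proof.
move=> hT; rewrite /gval; case: insubP => [u hu <-|] /=.
  by rewrite ffunE.
by rewrite negbK => /eqP ->; rewrite eq_sym (negbTE hT).
Qed.

Lemma gval_wgame (i : 'I_n) S : gval (wgame R i) S = (i \in S)%:R.
Proof.
rewrite /gval; case: insubP => [u hu <-|] /=.
  rewrite /wgame sum_ffunE.
  under eq_bigr => T _ do rewrite ffunE.
  rewrite big_mkcond (bigD1 (val u)) //= eqxx big1 ?addr0.
    by case: (i \in val u).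
  by move=> T /negbTE; rewrite eq_sym => ->; case: ifP.
by rewrite negbK => /eqP ->; rewrite in_set0.
Qed.


Lemma additive_eq (c : 'I_n -> R) v B lam :
  (forall T : nes n, v T = \sum_(i in val T) c i) ->
  balancing_weights B lam ->
  \sum_(S in B) lam S * gval v S = gval v setT.
Proof.
move=> hv [_ hl].
have gv S : gval v S = \sum_(i in S) c i.
  rewrite /gval; case: insubP => [u _ <-|] /=; first exact: hv.
  by rewrite negbK => /eqP ->; rewrite big_set0.
rewrite gv.
under eq_bigr => S _ do rewrite gv big_mkcond mulr_sumr.
rewrite exchange_big /=.
apply: eq_big => [i|i _]; first by rewrite in_setT.
transitivity ((\sum_(S in B | i \in S) lam S) * c i); last by rewrite hl mul1r.
rewrite mulr_suml big_mkcondr /=.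
by apply: eq_bigr => S _; case: (i \in S); rewrite ?mulr0 ?mul0r.
Qed.

Lemma additive_BG (c : 'I_n -> R) v :
  (forall T : nes n, v T = \sum_(i in val T) c i) -> BG v.
Proof.
move=> hv B _ _ lam hl; rewrite (additive_eq hv hl) //.
Qed.

Lemma additive_lin (c : 'I_n -> R) v :
  (forall T : nes n, v T = \sum_(i in val T) c i) -> lineality (@BG R n) v.
Proof.
move=> hv; split; first exact: additive_BG hv.
apply: (@additive_BG (fun i => - c i)) => T.
by rewrite ffunE hv sumrN.
Qed.

Lemma lin_eq v B lam : lineality (@BG R n) v -> minimal_balanced R B ->
  B != [set setT] -> balancing_weights B lam ->
  \sum_(S in B) lam S * gval v S = gval v setT.
Proof.
move=> [h1 h2] hB hne hl; apply/eqP; rewrite eq_le h1 //=.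
have := h2 B hB hne lam hl; rewrite /= gvalN.
rewrite (eq_bigr (fun S => - (lam S * gval v S))) ?sumrN ?lerN2 // => S _.
by rewrite gvalN mulrN.
Qed.

Lemma partition_mb B :
  set0 \notin B ->
  (forall i, exists2 T, T \in B & i \in T) ->
  (forall i T1 T2, T1 \in B -> T2 \in B -> i \in T1 -> i \in T2 -> T1 = T2) ->
  minimal_balanced R B /\ balancing_weights B (fun _ => 1 : R).
Proof.
move=> h0 hc hu.
have hw : balancing_weights B (fun _ => 1 : R).
  split=> [S _|i]; first exact: ltr01.
  have [T hT hiT] := hc i.
  rewrite (bigD1 T) ?hT ?hiT //= big1 ?addr0 // => S /andP[/andP[hS hiS] hST].
  by case/eqP: hST; apply: hu hiS hiT.
split=> //; split; first by split=> //; exists (fun _ => 1).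
move=> B' /properP [hsub [T hT hnT]] [_ [mu [_ hmu]]].
have : T != set0 by apply: contraNneq h0 => <-.
case/set0Pn => i hi.
have := hmu i; rewrite big1; first by move/esym/eqP; rewrite oner_eq0.
move=> S /andP[hS hiS].
have ST : S = T by apply: hu hiS hi => //; apply: (subsetP hsub).
by move: hnT; rewrite -ST hS.
Qed.

End Aux.

Section Aux2.
Variable R : realFieldType.
Variable m : nat.
Local Notation n := m.+2.

Lemma part_props (S : {set 'I_n}) : S != set0 ->
  let P := S |: [set [set j] | j in ~: S] in
  minimal_balanced R P /\ balancing_weights P (fun _ => 1 : R).
Proof.
move=> hS P; apply: partition_mb.
- rewrite in_setU1 negb_or eq_sym hS /=.
  apply/imsetP => -[j _ h]; have := set11 j; by rewrite -h in_set0.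
- move=> i; case hiS: (i \in S); first by exists S => //; rewrite setU11.
  exists [set i]; last exact: set11.
  by rewrite in_setU1 imset_f ?orbT // in_setC hiS.
- move=> i T1 T2; rewrite !in_setU1.
  case/orP => [/eqP->|/imsetP[j hj ->]]; case/orP => [/eqP->|/imsetP[k hk ->]] //.
  + move=> hi; rewrite in_set1 => /eqP ei; subst i.
    by move: hk; rewrite in_setC hi.
  + rewrite in_set1 => /eqP ei hi; subst i.
    by move: hj; rewrite in_setC hi.
  + by rewrite !in_set1 => /eqP <- /eqP <-.
Qed.

Lemma lin_additive v : lineality (@BG R n) v ->
  forall T : nes n, v T = \sum_(i in val T) gval v [set i].
Proof.
move=> hlin.
have key S : S != set0 -> S != setT ->
    gval v S + \sum_(j in ~: S) gval v [set j] = gval v setT.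
  move=> hS hST.
  have [hmb hw] := part_props hS.
  set P := S |: _ in hmb hw.
  have hne : P != [set setT].
    apply/negP => /eqP hP; have : S \in P by rewrite setU11.
    by rewrite hP in_set1 (negbTE hST).
  rewrite -(lin_eq hlin hmb hne hw) big_setU1 /=; last first.
    apply/imsetP => -[j hj h]; move: hj; rewrite in_setC h set11 //.
  rewrite big_imset /=; last by move=> j k _ _; apply: set1_inj.
  by rewrite mul1r; congr (_ + _); apply: eq_bigr => j _; rewrite mul1r.
have tot : gval v setT = \sum_j gval v [set j].
  have h0 : [set ord0 : 'I_n] != set0 by apply/set0Pn; exists ord0; rewrite set11.
  have h1 : [set ord0 : 'I_n] != setT.
    apply/negP => /eqP h; have : (ord_max : 'I_n) \in [set ord0] by rewrite h in_setT.
    by rewrite in_set1.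
  rewrite -(key _ h0 h1) [RHS](bigD1 ord0) //=; congr (_ + _).
  by apply: eq_bigl => j; rewrite in_setC in_set1.
move=> T; rewrite -gval_val.
have [hT|hT] := eqVneq (val T) setT.
  by rewrite hT tot; apply: eq_bigl => j; rewrite in_setT.
have := key _ (valP T) hT; rewrite tot [X in _ = X](bigID (mem (val T))) /=.
have -> : \sum_(j in ~: val T) gval v [set j] = \sum_(j | j \notin val T) gval v [set j].
  by apply: eq_bigl => j; rewrite in_setC.
move=> h; apply: (addIr (\sum_(j | j \notin val T) gval v [set j])); rewrite h.
by [].
Qed.

End Aux2.

Section Aux3.
Variable R : realFieldType.
Variable m : nat.
Local Notation n := m.+2.

Lemma sizeW : size (wseq R n) = n.
Proof. by rewrite size_map size_enum_ord. Qed.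

Lemma nthW (k : 'I_(size (wseq R n))) : (wseq R n)`_k = wgame R (cast_ord sizeW k).
Proof.
have hk : (k < n)%N := leq_trans (ltn_ord k) (eq_leq sizeW).
rewrite /wseq (nth_map ord0); last by rewrite size_enum_ord.
by congr wgame; apply: val_inj => /=; rewrite nth_enum_ord.
Qed.

Lemma big_cast p q (h : p = q) (F : 'I_q -> R) :
  \sum_(i < p) F (cast_ord h i) = \sum_(i < q) F i.
Proof. by case: q / h F => F; apply: eq_bigr => i _; rewrite cast_ord_id. Qed.

Lemma wgameE (j : 'I_n) (T : nes n) : wgame R j T = (j \in val T)%:R.
Proof. by rewrite -gval_val gval_wgame. Qed.

Lemma lincombW (c : 'I_(size (wseq R n)) -> R) (T : nes n) :
  lincomb c T = \sum_(j < n) c (cast_ord (esym sizeW) j) * (j \in val T)%:R.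
Proof.
rewrite ffunE -(big_cast sizeW); apply: eq_bigr => k _.
by rewrite nthW wgameE cast_ordK.
Qed.

Lemma wseq_free : lin_free (wseq R n).
Proof.
move=> c hc k.
have h1 : [set cast_ord sizeW k] != set0 by apply/set0Pn; exists (cast_ord sizeW k); rewrite set11.
pose T0 : nes n := exist (fun S => S != set0) _ h1.
have := congr1 (fun f : game R n => f T0) hc; rewrite lincombW ffunE /=.
rewrite (bigD1 (cast_ord sizeW k)) //= set11 mulr1 cast_ordK big1 ?addr0 //.
by move=> j hj; rewrite in_set1 (negbTE hj) mulr0.
Qed.

Lemma wseq_span v : lineality (@BG R n) v <-> in_span (wseq R n) v.
Proof.
split=> [hlin|[c ->]].
  exists (fun k => gval v [set cast_ord sizeW k]); apply/ffunP => T.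
  rewrite lincombW lin_additive // big_mkcond /=.
  by apply: eq_bigr => j _; rewrite cast_ordKV; case: (j \in val T); rewrite ?mulr1 ?mulr0.
apply: (@additive_lin R n (fun j => c (cast_ord (esym sizeW) j))) => T.
rewrite lincombW [RHS]big_mkcond /=.
by apply: eq_bigr => j _; case: (j \in val T); rewrite ?mulr1 ?mulr0.
Qed.

End Aux3.

Section Aux4.
Variable R : realFieldType.
Variable m : nat.
Local Notation n := m.+2.

Definition sg (T : nes n) : R := if val T == setT then 1 else -1.
Definition fd (T : nes n) : game R n := [ffun t : nes n => sg T * (val t == val T)%:R].
Definition Xd : seq (game R n) := [seq fd T | T <- enum {: nes n}].

Lemma sg_sq T : sg T * sg T = 1.
Proof. by rewrite /sg; case: ifP; rewrite ?mulr1 ?mulrNN ?mulr1. Qed.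

Lemma sg_neq0 T : sg T != 0.
Proof. by rewrite /sg; case: ifP; rewrite ?oppr_eq0 oner_eq0. Qed.

Lemma setT_neq0 : [set: 'I_n] != set0.
Proof. by apply/set0Pn; exists ord0; rewrite in_setT. Qed.

Definition t0 : nes n := exist (fun S => S != set0) _ setT_neq0.

Lemma Xd_size : size Xd = (2 ^ n - 1)%N.
Proof.
rewrite size_map -cardE card_sig.
have -> : #|[pred x : {set 'I_n} | x != set0]| = #|predC1 (set0 : {set 'I_n})| by [].
rewrite cardC1 subn1; congr (_.-1).
have h := card_powerset [set: 'I_n]; rewrite cardsT card_ord in h; rewrite -h.
by apply: eq_card => S; rewrite powersetE subsetT.
Qed.

Lemma nthXd (k : nat) (t : nes n) : (k < size Xd)%N ->
  Xd`_k t = sg (nth t0 (enum {: nes n}) k) * (val t == val (nth t0 (enum {: nes n}) k))%:R.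
Proof.
move=> hk; rewrite /Xd (nth_map t0); last by rewrite size_map in hk.
by rewrite !ffunE.
Qed.


Lemma gval_fd T S : gval (fd T) S = sg T * (S == val T)%:R.
Proof.
rewrite /gval; case: insubP => [u _ <-|] /=; first by rewrite ffunE.
rewrite negbK => /eqP ->; rewrite eq_sym (negbTE (valP T)) mulr0 //.
Qed.

End Aux4.

Section Uniq.
Variable R : realFieldType.
Variable n : nat.

Lemma mb_unique (B : {set {set 'I_n}}) (lam mu : {set 'I_n} -> R) :
  minimal_balanced R B -> balancing_weights B lam -> balancing_weights B mu ->
  forall S, S \in B -> lam S = mu S.
Proof.
move=> [[h0 _] hmin] [lp ls] [mp ms] S0 hS0.
apply/eqP; case: (boolP (lam S0 == mu S0)) => // hne; exfalso.
have [S2 hS2] : exists S2, (S2 \in B) && (mu S2 < lam S2).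
  case: (boolP [exists S, (S \in B) && (mu S < lam S)]) => [/existsP [S hS]|hnex]; first by exists S.
  have hle : forall S, S \in B -> lam S <= mu S.
    move=> S hS; rewrite leNgt; apply/negP => h; move/negP: hnex; apply.
    by apply/existsP; exists S; rewrite hS h.
  have hlt : lam S0 < mu S0.
    by rewrite lt_neqAle hle // andbT.
  have : S0 != set0 by apply: contraNneq h0 => <-.
  case/set0Pn => i hi.
  have := ls i; rewrite (bigD1 S0) ?hS0 ?hi //= => e1.
  have := ms i; rewrite (bigD1 S0) ?hS0 ?hi //= => e2.
  have : lam S0 + \sum_(S | (S \in B) && (i \in S) && (S != S0)) lam S <
         mu S0 + \sum_(S | (S \in B) && (i \in S) && (S != S0)) mu S.
    apply: ltr_leD hlt _; apply: ler_sum => S /andP[/andP[hS _] _]; exact: hle.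
  by rewrite e1 e2 ltxx.
pose r S := lam S / (lam S - mu S).
have [S1 /andP[hS1B hS1] hmin1] := @arg_minP _ _ _ S2 (fun S => (S \in B) && (mu S < lam S)) r hS2.
set t := r S1.
pose nu S := lam S + t * (mu S - lam S).
have d1 : lam S1 - mu S1 != 0 by rewrite subr_eq0 gt_eqF.
have tpos : 0 < t by rewrite /t /r divr_gt0 ?lp // subr_gt0.
have nu1 : nu S1 = 0.
  by rewrite /nu /t /r -[mu S1 - lam S1]opprB mulrN divfK // subrr.
have nuge : forall S, S \in B -> 0 <= nu S.
  move=> S hS; case: (ltP (mu S) (lam S)) => h.
    have := hmin1 S; rewrite hS h => /(_ isT) htr.
    have hd : 0 < lam S - mu S by rewrite subr_gt0.
    have : t * (lam S - mu S) <= lam S.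
      by rewrite -ler_pdivlMr // .
    by rewrite /nu -[mu S - lam S]opprB mulrN subr_ge0.
  rewrite /nu; apply: addr_ge0; first exact: ltW (lp S hS).
  by rewrite mulr_ge0 ?subr_ge0 // ltW.
have nusum : forall i, \sum_(S in B | i \in S) nu S = 1.
  move=> i; rewrite /nu big_split /= -mulr_sumr sumrB ls ms subrr mulr0 addr0 //.
pose B' := [set S in B | 0 < nu S].
apply: (hmin B').
  apply/properP; split; first by apply/subsetP => S; rewrite inE => /andP[].
  by exists S1 => //; rewrite inE nu1 ltxx andbF.
split; first by rewrite inE negb_and h0.
exists nu; split; first by move=> S; rewrite inE => /andP[].
move=> i; rewrite -(nusum i) big_mkcond [RHS]big_mkcond.
apply: eq_bigr => S _; rewrite inE.
case hS: (S \in B) => //=.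
case hp: (0 < nu S) => //=.
case: (i \in S) => //.
by apply/eqP; rewrite eq_le nuge // leNgt hp.
Qed.

End Uniq.

Section Poly.
Variable R : realFieldType.
Variable n : nat.

Definition vecB (B : {set {set 'I_n}}) (lam : {set 'I_n} -> R) : game R n :=
  [ffun T : nes n => (val T \in B)%:R * lam (val T) - (val T == setT)%:R].

Lemma dot_vecB B lam (v : game R n) :
  dotp (vecB B lam) v = \sum_(S in B) lam S * gval v S - gval v setT.
Proof.
rewrite /dotp.
under eq_bigr do rewrite ffunE mulrBl.
rewrite sumrB.
rewrite (sum_gval (fun S => (S \in B)%:R * lam S)).
rewrite (sum_gval (fun S => (S == setT)%:R)).
congr (_ - _).
  rewrite [RHS]big_mkcond; apply: eq_bigr => S _.
  by case: (S \in B); rewrite ?mul1r ?mul0r.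
rewrite (bigD1 setT) // eqxx mul1r big1; last by move=> S hS; rewrite (negbTE hS) mul0r.
by move: (gval v _) => a; apply: (etrans _ (addr0 a)).
Qed.

Definition cond (B : {set {set 'I_n}}) (v : game R n) :=
  minimal_balanced R B -> B != [set setT] -> forall lam, balancing_weights B lam ->
  \sum_(S in B) lam S * gval v S <= gval v setT.

Lemma poly_aux (s : seq {set {set 'I_n}}) : exists A : seq (game R n),
  forall v, (forall a, a \in A -> dotp a v <= 0) <-> (forall B, B \in s -> cond B v).
Proof.
elim: s => [|B s [A hA]].
  by exists [::] => v; split => _ x; rewrite in_nil.
case: (classic (minimal_balanced R B /\ B != [set setT])) => [[hmb hne]|hn].
  have [_ [lam hl]] := hmb.1.
  exists (vecB B lam :: A) => v; split.
    move=> h B'; rewrite in_cons => /orP[/eqP ->|hB'].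
      move=> _ _ mu hmu.
      have := h _ (mem_head _ _); rewrite dot_vecB subr_le0.
      suff -> : \sum_(S in B) mu S * gval v S = \sum_(S in B) lam S * gval v S by [].
      apply: eq_bigr => S hS; by rewrite (mb_unique hmb hmu hl hS).
    by move: B' hB'; apply/(hA v) => a ha; apply: h; rewrite in_cons ha orbT.
  move=> h a; rewrite in_cons => /orP[/eqP ->|ha].
    rewrite dot_vecB subr_le0; apply: (h B (mem_head _ _)) => //.
  by move: a ha; apply/(hA v) => B' hB'; apply: h; rewrite in_cons hB' orbT.
exists A => v; split.
  move=> h B'; rewrite in_cons => /orP[/eqP ->|hB'].
    by move=> hmb hne; exfalso; apply: hn.
  by move: B' hB'; apply/(hA v).
by move=> h; apply/(hA v) => B' hB'; apply: h; rewrite in_cons hB' orbT.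
Qed.

Lemma BG_poly : polyhedral_cone (@BG R n).
Proof.
have [A hA] := poly_aux (enum {: {set {set 'I_n}}}).
exists A => v; rewrite hA; split.
  by move=> h B _; apply: h.
by move=> h B; apply: h; rewrite mem_enum.
Qed.

End Poly.

Section Aux4b.
Variable R : realFieldType.
Variable m : nat.
Local Notation n := m.+2.
Local Notation fd := (@fd R m).
Local Notation Xd := (Xd R m).
Local Notation sg := (@sg R m).
Local Notation t0 := (t0 m).

Lemma BG_fd T : BG (fd T).
Proof.
move=> B hB hne lam [hpos hl].
under eq_bigr => S _ do rewrite gval_fd.
rewrite gval_fd /sg; case: ifP => hT.
  rewrite (eqP hT) eqxx mul1r; under eq_bigr do rewrite mul1r.
  rewrite (bigID (fun S : {set 'I_n} => (ord0 : 'I_n) \in S)) /= [X in _ + X]big1 ?addr0; last first.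
    move=> S /andP[_ h]; case: eqP => [e|]; last by rewrite mulr0.
    by rewrite e in_setT in h.
  have h1 := hl ord0.
  have h2 : \sum_(S in B | (ord0 : 'I_n) \in S) lam S * (S == [set: 'I_n])%:R
         <= \sum_(S in B | (ord0 : 'I_n) \in S) lam S.
    apply: ler_sum => S /andP[hS _].
    case: eqP => _; rewrite ?mulr1 ?mulr0 //; exact: ltW (hpos S hS).
  by rewrite h1 in h2.
rewrite eq_sym hT mulr0; apply: sumr_le0 => S hS.
rewrite mulN1r mulrN oppr_le0 mulr_ge0 //; exact: ltW (hpos S hS).
Qed.

Lemma Xd_BG x : x \in Xd -> BG x.
Proof. by case/mapP => T _ ->; exact: BG_fd. Qed.

Lemma Xd_free : lin_free Xd.
Proof.
move=> c hc k.
have hk : (k < size (enum {: nes n}))%N by rewrite -(size_map fd); exact: ltn_ord.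

pose e (j : nat) := nth t0 (enum {: nes n}) j.
have := congr1 (fun f : game R n => f (e k)) hc. rewrite !ffunE.
rewrite (bigD1 k) // big1 ?addr0.
  rewrite nthXd // eqxx mulr1 => h; have /eqP : c k * sg (nth t0 (enum {: nes n}) k) = 0 := etrans (esym (addr0 _)) h.
  rewrite mulf_eq0 (negbTE (sg_neq0 R _)) orbF.
  by move/eqP.
move=> j hj; rewrite nthXd //.
have hj' : (j < size (enum {: nes n}))%N by rewrite -(size_map fd); exact: ltn_ord.
have -> : (val (e k) == val (nth t0 (enum {: nes n}) j)) = false.
  rewrite (inj_eq val_inj) /e nth_uniq ?enum_uniq //.
  by apply/negbTE; rewrite eq_sym; move: hj; rewrite andTb.
by rewrite !mulr0.
Qed.

Lemma Xd_span x : in_span Xd x.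
Proof.
have hs : size Xd = size (enum {: nes n}) by rewrite size_map.
exists (fun k => sg (nth t0 (enum {: nes n}) k) * x (nth t0 (enum {: nes n}) k)).
apply/ffunP => t; rewrite ffunE.
have ht : (index t (enum {: nes n}) < size Xd)%N by rewrite hs index_mem mem_enum.
rewrite (bigD1 (Ordinal ht)) // big1.
  rewrite nthXd // nth_index ?mem_enum // eqxx mulr1 mulrC mulrA (sg_sq R) mul1r.
  apply: etrans (esym (addr0 _)) _; move: (x t) => a; reflexivity.
move=> j; rewrite andTb => hj; rewrite nthXd //.
have hj' : (j < size (enum {: nes n}))%N by rewrite -hs.
have hne : t != nth t0 (enum {: nes n}) j.
  apply: contra hj => /eqP et.
  apply/eqP; apply: val_inj.
  have := index_uniq t0 hj' (enum_uniq {: nes n}); rewrite -et => e2.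
  exact: (esym e2).
rewrite (inj_eq val_inj) (negbTE hne).
by rewrite !mulr0.
Qed.

End Aux4b.

Section Extra.
Variable R : realFieldType.
Variable m : nat.
Local Notation n := m.+2.

Lemma wgame_lin (i : 'I_n) : lineality (@BG R n) (wgame R i).
Proof.
apply: (@additive_lin R n (fun j => (j == i)%:R)) => T; rewrite wgameE.
transitivity (\sum_(j | j == i) ((i \in val T)%:R : R)); first by rewrite big_pred1_eq.
rewrite big_mkcond [RHS]big_mkcond; apply: eq_bigr => j _.
by case: (eqVneq j i) => [->|h]; case: (i \in val T); case: (j \in val T).
Qed.

End Extra.

Unset Implicit Arguments.

Theorem theorem2 (R : realFieldType) (n : nat) (hn : (2 <= n)%N) :
  polyhedral_cone (@BG R n) /\
  dim_eq (@BG R n) (2 ^ n - 1) /\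
  ~ pointed (@BG R n) /\
  dim_eq (lineality (@BG R n)) n /\
  lin_free (wseq R n) /\
  (forall x, lineality (@BG R n) x <-> in_span (wseq R n) x).
Proof.
case: n hn => [|[|m]] // _.
split; first exact: BG_poly.
split.
  exists (Xd R m); split; first exact: Xd_BG.
  split; first exact: Xd_free.
  split; first exact: Xd_size.
  by move=> x _; exact: Xd_span.
split.
  move=> hp; have := hp _ (wgame_lin R (ord0 : 'I_m.+2)).
  move/(congr1 (fun f : game R m.+2 => f (t0 m))).
  rewrite wgameE ffunE in_setT => /eqP; by rewrite oner_eq0.
split.
  exists (wseq R m.+2); split.
    by move=> x /mapP [i _ ->]; exact: wgame_lin.
  split; first exact: wseq_free.
  split; first exact: sizeW.
  by move=> x /wseq_span.
split; first exact: wseq_free.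
exact: wseq_span.
Qed.
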